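(* Let $M$ be a finite cyclic group, let $s,t\in M$ and let $d>1$ be an integer. Then there are integers $k,l$ with $s^k=t^l$ such that $d$ does not divide both $k$ and $l$. *)

(* Defs.v *)
From mathcomp Require Import all_boot all_fingroup all_algebra.
Set Implicit Arguments. Unset Strict Implicit. Unset Printing Implicit Defensive.

Definition zexpg (gT : finGroupType) (x : gT) (k : int) : gT :=
  match k with
  | Posz n => (x ^+ n)%g
  | Negz n => (x ^- n.+1)%g
  end.

(* Main.v *)
Require Import Defs.
From mathcomp Require Import all_boot all_fingroup all_solvable all_algebra.

Section A.
Local Open Scope group_scope.
Lemma aux (gT : finGroupType) (M : {group gT}) (s t : gT) :
  cyclic M -> s \in M -> t \in M ->
  exists l : nat, (s ^+ (#[s]%g %/ gcdn #[s]%g #[t]%g) = t ^+ l)%g.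
Proof.
move=> cM sM tM.
have hd : (#[s]%g %/ gcdn #[s]%g #[t]%g) %| #[s]%g.
  by apply: dvdn_div; apply: dvdn_gcdl.
have ho : #[s ^+ (#[s]%g %/ gcdn #[s]%g #[t]%g)] = gcdn #[s]%g #[t]%g.
  by rewrite orderXdiv // divnA ?dvdn_gcdl // mulKn // order_gt0.
have sub : <[s ^+ (#[s]%g %/ gcdn #[s]%g #[t]%g)]> \subset <[t]>.
  rewrite -(cardSg_cyclic cM) ?cycle_subG ?groupX //.
  by rewrite -orderE ho -orderE dvdn_gcdr.
have : s ^+ (#[s]%g %/ gcdn #[s]%g #[t]%g) \in <[t]>.
  by apply: (subsetP sub); apply: cycle_id.
by case/cycleP => l ->; exists l.
Qed.
End A.

Lemma ordg (gT : finGroupType) (x : gT) : #[x]%g = #[x]%g. Proof. by []. Qed.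

Theorem lemma4p2 (gT : finGroupType) (M : {group gT}) (s t : gT) (d : nat) :
  cyclic M -> s \in M -> t \in M -> (1 < d)%N ->
  exists k l : int, zexpg s k = zexpg t l /\
    ~ ((d%:Z %| k)%Z /\ (d%:Z %| l)%Z).
Proof.
move=> cM sM tM d1.
have g0 : 0 < gcdn #[s]%g #[t]%g by rewrite gcdn_gt0 order_gt0.
case: (boolP (d %| #[s]%g %/ gcdn #[s]%g #[t]%g)) => hs.
  case: (boolP (d %| #[t]%g %/ gcdn #[t]%g #[s]%g)) => ht.
    exfalso.
    have h1 : (d * gcdn #[s]%g #[t]%g)%N %| #[s]%g.
      by have := dvdn_mul hs (dvdnn (gcdn #[s]%g #[t]%g)); rewrite divnK ?dvdn_gcdl.
    have h2 : (d * gcdn #[s]%g #[t]%g)%N %| #[t]%g.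
      by have := dvdn_mul ht (dvdnn (gcdn #[t]%g #[s]%g)); rewrite divnK ?dvdn_gcdl // gcdnC.
    have h3 : (d * gcdn #[s]%g #[t]%g)%N %| gcdn #[s]%g #[t]%g by rewrite dvdn_gcd h1 h2.
    have := dvdn_leq g0 h3.
    rewrite -{2}(mul1n (gcdn _ _)) leq_pmul2r //.
    by rewrite leqNgt d1.
  have [l hl] := @aux _ _ t s cM tM sM.
  exists (Posz l), (Posz (#[t]%g %/ gcdn #[t]%g #[s]%g)); split => //=.
  by case => _; rewrite dvdzE /= (negbTE ht).
have [l hl] := @aux _ _ s t cM sM tM.
exists (Posz (#[s]%g %/ gcdn #[s]%g #[t]%g)), (Posz l); split => //=.
by case; rewrite dvdzE /= (negbTE hs).
Qed.
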